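(* Let $G$ be a finite abelian group, $k\ge1$, $\Gamma=G\wr\mathbb{Z}^k=\Sigma\rtimes_\alpha\mathbb{Z}^k$, and let $\varphi:\Gamma\to\Gamma$ be an automorphism. Let $\varphi'=\varphi|_\Sigma:\Sigma\to\Sigma$ and let $\overline{\varphi}:\mathbb{Z}^k\to\mathbb{Z}^k$ be the automorphism induced by $\varphi$ on $\Gamma/\Sigma\cong\mathbb{Z}^k$. Then $R(\varphi)<\infty$ if and only if $R(\overline{\varphi})<\infty$ and $R(\tau_m\circ\varphi')<\infty$ for every $m\in\mathbb{Z}^k$. Moreover, in the ''if'' direction it suffices to require $R(\tau_m\circ\varphi')<\infty$ only for $m$ running over a set of representatives of the Reidemeister classes of $\overline{\varphi}$ (together with $R(\overline{\varphi})<\infty$).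
   Context: Reidemeister number: for an endomorphism $\psi$ of a group $\Gamma$, $x,y$ are $\psi$-conjugate if $y=gx\psi(g^{-1})$ for some $g\in\Gamma$; $R(\psi)$ is the number of such classes (possibly $\infty$). $G\wr\mathbb{Z}^k=\Sigma\rtimes_\alpha\mathbb{Z}^k$ with $\Sigma=\bigoplus_{x\in\mathbb{Z}^k}G_x$, $G_x\cong G$, $g_x$ denoting $g\in G$ placed in $G_x$, and $\alpha(x)(g_y)=g_{x+y}$. $\Sigma$ is the set of torsion elements of $\Gamma$, hence invariant under every automorphism. For $m\in\mathbb{Z}^k\subset\Gamma$, $\tau_m:\Sigma\to\Sigma$ denotes conjugation $h\mapsto mhm^{-1}$ restricted to $\Sigma$, i.e. $\tau_m=\alpha(m)$. *)

(* Defs.v *)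
From HB Require Import structures.
From Stdlib Require Lists.List.
From mathcomp Require Import all_boot all_order all_algebra.
Set Implicit Arguments. Unset Strict Implicit. Unset Printing Implicit Defensive.
Import GRing.Theory.
Local Open Scope ring_scope.

(* Generic twisted conjugacy, relativized to a subset P of a carrier T
   (P is the group, on which mul/inv restrict to the group law). *)
Definition twconj (T : Type) (mul : T -> T -> T) (inv : T -> T) (P : T -> Prop)
  (psi : T -> T) (x y : T) : Prop :=
  exists g, P g /\ y = mul (mul g x) (psi (inv g)).

Definition reid_finite (T : Type) (mul : T -> T -> T) (inv : T -> T) (P : T -> Prop)
  (psi : T -> T) : Prop :=
  exists s : seq T, (forall y, Stdlib.Lists.List.In y s -> P y) /\
    forall x, P x -> exists y, Stdlib.Lists.List.In y s /\ twconj mul inv P psi x y.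

Definition reid_reps (T : Type) (mul : T -> T -> T) (inv : T -> T) (P : T -> Prop)
  (psi : T -> T) (S : T -> Prop) : Prop :=
  (forall r, S r -> P r) /\
  (forall x, P x -> exists r, S r /\ twconj mul inv P psi x r) /\
  (forall r1 r2, S r1 -> S r2 -> twconj mul inv P psi r1 r2 -> r1 = r2).

Definition Zk (k : nat) := 'rV[int]_k.

(* Carrier of G wr Z^k : pairs (f, m) with f : Z^k -> G; the group consists of
   those with f finitely supported. f x is the G_x-coordinate. *)
Definition Wr (G : finZmodType) (k : nat) := ((Zk k -> G) * Zk k)%type.

Definition fin_supp (G : finZmodType) (k : nat) (f : Zk k -> G) : Prop :=
  exists s : seq (Zk k), forall x, x \notin s -> f x = 0.

Definition inGamma (G : finZmodType) (k : nat) (x : Wr G k) : Prop := fin_supp x.1.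

Definition inSigma (G : finZmodType) (k : nat) (x : Wr G k) : Prop :=
  inGamma x /\ x.2 = 0.

(* Semidirect product law with alpha(m)(g_y) = g_{m+y}:
   (f,m)(g,n) = (f + alpha(m) g, m + n), (alpha(m) g)(x) = g(x - m). *)
Definition wr_mul (G : finZmodType) (k : nat) (a b : Wr G k) : Wr G k :=
  (fun x => a.1 x + b.1 (x - a.2), a.2 + b.2).
Definition wr_inv (G : finZmodType) (k : nat) (a : Wr G k) : Wr G k :=
  (fun x => - a.1 (x + a.2), - a.2).
Definition wr_one (G : finZmodType) (k : nat) : Wr G k := (fun _ => 0, 0).

Definition wr_Z (G : finZmodType) (k : nat) (m : Zk k) : Wr G k := (fun _ => 0, m).

Definition is_wr_aut (G : finZmodType) (k : nat) (phi : Wr G k -> Wr G k) : Prop :=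
  (forall x, inGamma x -> inGamma (phi x)) /\
  (forall x y, inGamma x -> inGamma y -> phi (wr_mul x y) = wr_mul (phi x) (phi y)) /\
  (forall x y, inGamma x -> inGamma y -> phi x = phi y -> x = y) /\
  (forall y, inGamma y -> exists x, inGamma x /\ phi x = y).

(* induced automorphism on Gamma/Sigma = Z^k (quotient map = 2nd projection) *)
Definition phibar (G : finZmodType) (k : nat) (phi : Wr G k -> Wr G k) (m : Zk k) : Zk k :=
  (phi (wr_Z G m)).2.

Definition tau_phi (G : finZmodType) (k : nat) (phi : Wr G k -> Wr G k) (m : Zk k)
  (x : Wr G k) : Wr G k :=
  wr_mul (wr_mul (wr_Z G m) (phi x)) (wr_inv (wr_Z G m)).

Definition R_Gamma_fin (G : finZmodType) (k : nat) (phi : Wr G k -> Wr G k) :=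
  reid_finite (@wr_mul G k) (@wr_inv G k) (@inGamma G k) phi.
Definition R_Zk_fin (k : nat) (psi : Zk k -> Zk k) :=
  reid_finite (fun a b : Zk k => a + b) (fun a => - a) (fun _ => True) psi.
Definition R_Sigma_fin (G : finZmodType) (k : nat) (psi : Wr G k -> Wr G k) :=
  reid_finite (@wr_mul G k) (@wr_inv G k) (@inSigma G k) psi.
Definition Zk_reps (k : nat) (psi : Zk k -> Zk k) (S : Zk k -> Prop) :=
  reid_reps (fun a b : Zk k => a + b) (fun a => - a) (fun _ => True) psi S.

(* Main.v *)
Require Import Defs.
From HB Require Import structures.
From mathcomp Require Import all_boot all_order all_algebra all_fingroup all_solvable.
From Stdlib Require Import Classical FunctionalExtensionality.
Set Implicit Arguments. Unset Strict Implicit. Unset Printing Implicit Defensive.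
Import GRing.Theory FinRing.Theory.
Local Open Scope ring_scope.

Lemma pig (U : Type) (s : seq U) (R : nat -> U -> Prop) :
  (forall c, exists y, List.In y s /\ R c y) ->
  exists c1 c2 y, (c1 < c2)%N /\ R c1 y /\ R c2 y.
Proof.
elim: s R => [|a s IH] R H.
  by have [y [[] _]] := H 0%N.
destruct (classic (exists c1 c2, (c1 < c2)%N /\ R c1 a /\ R c2 a)) as [[c1 [c2 [? [? ?]]]]|Hn].
  by exists c1, c2, a.
destruct (classic (exists c0, R c0 a)) as [[c0 Hc0]|Hn0].
  have H' : forall c, exists y, List.In y s /\ R (c + c0.+1)%N y.
    move=> c; have [y [[<-|Hy] Ry]] := H (c + c0.+1)%N.
      exfalso; apply: Hn; exists c0, (c + c0.+1)%N; split => //.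
      by rewrite addnS ltnS leq_addl.
    by exists y.
  have [c1 [c2 [y [lt [R1 R2]]]]] := IH _ H'.
  by exists (c1 + c0.+1)%N, (c2 + c0.+1)%N, y; rewrite ltn_add2r.
have H' : forall c, exists y, List.In y s /\ R c y.
  move=> c; have [y [[<-|Hy] Ry]] := H c.
    by exfalso; apply: Hn0; exists c.
  by exists y.
exact: IH _ H'.
Qed.

Lemma addf_props k (psi : Zk k -> Zk k) (hadd : forall a b, psi (a+b) = psi a + psi b) :
  psi 0 = 0 /\ (forall a, psi (- a) = - psi a) /\ (forall a (n : nat), psi (a *+ n) = psi a *+ n).
Proof.
have h0 : psi 0 = 0.
  have e := hadd 0 0; rewrite addr0 in e.
  have := congr1 (fun x => x - psi 0) e; by rewrite /= subrr addrK.
have hN : forall a, psi (- a) = - psi a.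
  by move=> a; apply/eqP; rewrite -addr_eq0 -hadd addNr h0.
split=> //; split=> // a; elim=> [|n IH]; first by rewrite !mulr0n h0.
by rewrite !mulrS hadd IH.
Qed.

Lemma addf_scale k (psi : Zk k -> Zk k) (hadd : forall a b, psi (a+b) = psi a + psi b) :
  forall (z : int) a, psi (z *: a) = z *: psi a.
Proof.
have [h0 [hN hn]] := addf_props hadd.
move=> z a; rewrite -[z]intz !scaler_int.
case: z => n /=; first by rewrite /intmul hn.
by rewrite /intmul hN hn.
Qed.

Lemma addf_mx k (psi : Zk k -> Zk k) (hadd : forall a b, psi (a+b) = psi a + psi b) :
  forall v, psi v = v *m \matrix_(i < k) psi 'e_i.
Proof.
have [h0 [hN hn]] := addf_props hadd.
move=> v; rewrite mulmx_sum_row {1}[v]row_sum_delta.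
rewrite (big_morph psi hadd h0); apply: eq_bigr => i _.
by rewrite addf_scale // rowK.
Qed.

From mathcomp Require Import zify ring.

Lemma fix_trivial k (psi : Zk k -> Zk k) (hadd : forall a b, psi (a+b) = psi a + psi b)
  (hfin : R_Zk_fin psi) n : psi n = n -> n = 0.
Proof.
have [h0 [hN hn]] := addf_props hadd.
have hdj : forall j : 'I_k, exists dw : nat * Zk k, (0 < dw.1)%N /\ dw.2 - psi dw.2 = 'e_j *+ dw.1.
  move=> j; case: hfin => s [_ Hs].
  have := @pig _ s (fun c y => twconj (fun a b : Zk k => a + b) (fun a => - a) (fun _ => True) psi ('e_j *+ c) y).
  case=> [c|c1 [c2 [y [lt [[g1 [_ E1]] [g2 [_ E2]]]]]]].
    by have [y [Hy Hc]] := Hs ('e_j *+ c) I; exists y.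
  exists ((c2 - c1)%N, g1 - g2) => /=; split; first by rewrite subn_gt0.
  rewrite E1 !hN in E2.
  have e : psi (g1 - g2) = psi g1 - psi g2 by rewrite hadd hN.
  rewrite e; apply/rowP => i; move/rowP/(_ i): E2; rewrite !mxE !mulmxnE => E2.
  rewrite mulrnBr ?(ltnW lt) //; move: E2; set x1 := (_ *+ c1); set x2 := (_ *+ c2); clearbody x1 x2; move=> E; apply/eqP; rewrite -subr_eq0; apply/eqP; move/eqP: E; rewrite -subr_eq0 => /eqP <-; ring.
have [dw Hdw] := fin_all_exists hdj.
set A := \matrix_(i < k) psi 'e_i.
set M := 1%:M - A.
have hM : forall v, v *m M = v - psi v.
  by move=> v; rewrite mulmxBr mulmx1 -addf_mx.
set W := \matrix_(j < k) (dw j).2.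
set D := \row_(j < k) ((dw j).1)%:R : 'rV[int]_k.
have hWM : W *m M = diag_mx D.
  apply/row_matrixP => j; rewrite row_mul rowK hM row_diag_mx mxE scaler_nat.
  by have [_ ->] := Hdw j.
have hdet : \det M != 0.
  apply/negP => /eqP h.
  have := congr1 determinant hWM; rewrite det_mulmx h mulr0 det_diag => /eqP.
  apply/negP; rewrite eq_sym; apply/prodf_neq0 => j _; rewrite mxE.
  by have [hp _] := Hdw j; rewrite Num.Theory.pnatr_eq0 -lt0n.
move=> hfix.
have h1 : n *m M = 0 by rewrite hM hfix subrr.
have := congr1 (fun x => x *m \adj M) h1.
rewrite -mulmxA mul_mx_adj mul_mx_scalar mul0mx => h2.
apply/rowP => i; move/rowP/(_ i): h2; rewrite !mxE => /eqP.
by rewrite mulf_eq0 (negbTE hdet) /= => /eqP.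
Qed.
Lemma tors (G : finZmodType) (x : G) : x *+ #|G| = 0.
Proof. rewrite -zmodXgE -cardsT; apply: expg_cardG; exact: in_setT. Qed.

Section Grp.
Variables (G : finZmodType) (k : nat).
Local Notation T := (Wr G k).
Local Notation wmul := (@wr_mul G k).
Local Notation winv := (@wr_inv G k).
Local Notation wone := (@wr_one G k).

Lemma wr_eq (a b : T) : (forall x, a.1 x = b.1 x) -> a.2 = b.2 -> a = b.
Proof.
case: a b => f m [g n] /= h1 h2; rewrite h2.
by rewrite (functional_extensionality f g h1).
Qed.

Lemma mulA a b c : wmul a (wmul b c) = wmul (wmul a b) c.
Proof. apply: wr_eq => [x|] /=; last by rewrite addrA.
by rewrite addrA opprD addrA.
Qed.

Lemma mul1g a : wmul wone a = a.
Proof. by apply: wr_eq => [x|] /=; rewrite ?add0r ?subr0. Qed.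

Lemma mulg1 a : wmul a wone = a.
Proof. by apply: wr_eq => [x|] /=; rewrite addr0. Qed.

Lemma mulVg a : wmul (winv a) a = wone.
Proof. by apply: wr_eq => [x|] /=; rewrite ?addNr // opprK addNr. Qed.

Lemma mulgV a : wmul a (winv a) = wone.
Proof. by apply: wr_eq => [x|] /=; rewrite ?subrr // subrK subrr. Qed.

Lemma mulKg a b : wmul (winv a) (wmul a b) = b.
Proof. by rewrite mulA mulVg mul1g. Qed.
Lemma mulgK a b : wmul (wmul a b) (winv b) = a.
Proof. by rewrite -mulA mulgV mulg1. Qed.

Lemma inv_uniq a b : wmul a b = wone -> a = winv b.
Proof. by move=> h; rewrite -(mulgK a b) h mul1g. Qed.

Lemma invM a b : winv (wmul a b) = wmul (winv b) (winv a).
Proof.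
by symmetry; apply: inv_uniq; rewrite -mulA (mulA (winv a)) mulVg mul1g mulVg.
Qed.

Lemma invK a : winv (winv a) = a.
Proof. by symmetry; apply: inv_uniq; rewrite mulgV. Qed.

Lemma inv1 : winv wone = wone.
Proof. by symmetry; apply: inv_uniq; rewrite mulg1. Qed.

Lemma inGamma_one : inGamma wone.
Proof. by exists [::]. Qed.

Lemma inGamma_Z (m : Zk k) : inGamma (wr_Z G m).
Proof. by exists [::]. Qed.

Lemma inGamma_mul (a b : T) : inGamma a -> inGamma b -> inGamma (wmul a b).
Proof.
case=> sa ha [sb hb]; exists (sa ++ map (fun y => y + a.2) sb) => x.
rewrite mem_cat negb_or => /andP [h1 h2] /=.
rewrite ha // hb ?add0r //; apply: contra h2 => h.
by apply/mapP; exists (x - a.2); rewrite ?subrK.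
Qed.

Lemma inGamma_inv (a : T) : inGamma a -> inGamma (winv a).
Proof.
case=> sa ha; exists (map (fun y => y - a.2) sa) => x hx /=.
rewrite ha ?oppr0 //; apply: contra hx => h.
by apply/mapP; exists (x + a.2); rewrite ?addrK.
Qed.

Lemma decomp (a : T) : a = wmul (a.1, 0) (wr_Z G a.2).
Proof. by apply: wr_eq => [x|] /=; rewrite ?addr0 ?add0r. Qed.

Lemma inSigma_part (a : T) : inGamma a -> inSigma (a.1, 0).
Proof. by move=> h; split. Qed.

Lemma invZ (m : Zk k) : winv (wr_Z G m) = wr_Z G (- m).
Proof. by apply: wr_eq => [x|] //=; rewrite oppr0. Qed.

Lemma mulZ (a b : Zk k) : wmul (wr_Z G a) (wr_Z G b) = wr_Z G (a + b).
Proof. by apply: wr_eq => [x|] //=; rewrite addr0. Qed.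

Definition pw (a : T) n := iter n (wmul a) wone.

Lemma pw2 (a : T) n : (pw a n).2 = a.2 *+ n.
Proof. by elim: n => [|n IH] //=; rewrite IH mulrS. Qed.

Lemma pwSigma (a : T) n : a.2 = 0 -> pw a n = (fun x => a.1 x *+ n, 0).
Proof.
move=> h; elim: n => [|n IH]; first by apply: wr_eq.
by rewrite /= IH; apply: wr_eq => [x|] /=; rewrite ?h ?subr0 ?mulrS ?addr0.
Qed.

Lemma pwSigma1 (a : T) : a.2 = 0 -> pw a #|G| = wone.
Proof. by move=> h; rewrite pwSigma //; apply: wr_eq => [x|] //=; rewrite tors. Qed.

End Grp.

Section Phi.
Variables (G : finZmodType) (k : nat).
Local Notation T := (Wr G k).
Local Notation wmul := (@wr_mul G k).
Local Notation winv := (@wr_inv G k).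
Local Notation wone := (@wr_one G k).
Variables (phi : T -> T) (hphi : is_wr_aut phi).

Let hG := hphi.1.
Let hM := hphi.2.1.

Lemma phi1 : phi wone = wone.
Proof.
have := hM (inGamma_one G k) (inGamma_one G k); rewrite mulg1 => h.
transitivity (wmul (wmul (phi wone) (phi wone)) (winv (phi wone))).
  by rewrite mulgK.
by rewrite -h mulgV.
Qed.

Lemma phiV (x : T) : inGamma x -> phi (winv x) = winv (phi x).
Proof.
move=> hx; apply: inv_uniq.
by rewrite -hM ?mulVg ?phi1 //; apply: inGamma_inv.
Qed.

Lemma inGamma_pw (a : T) n : inGamma a -> inGamma (pw a n).
Proof. by move=> h; elim: n => [|n IH] /=; [apply: inGamma_one|apply: inGamma_mul]. Qed.

Lemma phi_pw (a : T) n : inGamma a -> phi (pw a n) = pw (phi a) n.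
Proof.
move=> h; elim: n => [|n IH] /=; first exact: phi1.
by rewrite hM ?IH //; apply: inGamma_pw.
Qed.

Lemma phiSigma (a : T) : inSigma a -> (phi a).2 = 0.
Proof.
case=> ha h2.
have := pw2 (phi a) #|G|; rewrite -phi_pw // pwSigma1 // phi1 /= => /esym/eqP.
rewrite -[_ *+ _]/(_ : 'rV[int]_k) => /eqP h.
apply/rowP => i; move/rowP/(_ i): h; rewrite !mxE mulmxnE => /eqP.
rewrite Num.Theory.mulrn_eq0 => /orP [|/eqP //].
have : (0 < #|G|)%N by apply/card_gt0P; exists 0.
by rewrite lt0n => /negbTE ->.
Qed.


Lemma phibar_add (a b : Zk k) : phibar phi (a + b) = phibar phi a + phibar phi b.
Proof. rewrite /phibar -mulZ hM; try exact: inGamma_Z. by []. Qed.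

Lemma phi2 (y : T) : inGamma y -> (phi y).2 = phibar phi y.2.
Proof.
move=> hy; have -> : phi y = phi (wmul (y.1, 0) (wr_Z G y.2)) by rewrite -decomp.
have hs : inSigma (y.1, 0 : Zk k) by split.
rewrite hM; [|by case: hs|exact: inGamma_Z].
by rewrite /= phiSigma // add0r.
Qed.

Definition tw := twconj wmul winv (@inGamma G k) phi.

Lemma tw_refl x : tw x x.
Proof.
exists wone; split; first exact: inGamma_one.
by rewrite inv1 phi1 mul1g mulg1.
Qed.

Lemma tw_sym x y : tw x y -> tw y x.
Proof.
case=> g [hg ->]; have hgi := inGamma_inv hg.
exists (winv g); split => //; rewrite invK.
by rewrite (mulA (winv g)) mulKg -mulA -hM // mulVg phi1 mulg1.
Qed.

Lemma tw_trans x y z : tw x y -> tw y z -> tw x z.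
Proof.
case=> g [hg ->] [h [hh ->]]; exists (wmul h g); split; first exact: inGamma_mul.
rewrite invM hM; try exact: inGamma_inv.
by rewrite !mulA.
Qed.

End Phi.

Section Main.
Variables (G : finZmodType) (k : nat).
Local Notation T := (Wr G k).
Local Notation wmul := (@wr_mul G k).
Local Notation winv := (@wr_inv G k).
Local Notation wone := (@wr_one G k).
Variables (phi : T -> T) (hphi : is_wr_aut phi).

Let hG := hphi.1.
Let hM := hphi.2.1.

Definition twZ := twconj (fun a b : Zk k => a + b) (fun a => - a) (fun _ => True) (phibar phi).

Lemma twZ_trans x y z : twZ x y -> twZ y z -> twZ x z.
Proof.
case=> g [_ Ey] [h [_ Ez]]; exists (h + g); split => //.
rewrite Ez Ey opprD !(phibar_add hphi).
by apply/rowP => i; rewrite !mxE; ring.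
Qed.

Lemma mulgVK (a b : T) : wmul (wmul a (winv b)) b = a.
Proof. by rewrite -mulA mulVg mulg1. Qed.

Lemma back (s : seq (Zk k)) :
  (forall m, exists y, List.In y s /\ twZ m y) ->
  (forall y, List.In y s -> R_Sigma_fin (tau_phi phi y)) -> R_Gamma_fin phi.
Proof.
move=> hcov hS.
have [L [HL1 HL2]] : exists L : seq T, (forall z, List.In z L -> inGamma z) /\
    forall y, List.In y s -> forall sg, inSigma sg ->
      exists z, List.In z L /\ tw phi (wmul sg (wr_Z G y)) z.
  elim: s {hcov} hS => [|y s IH] h.
    by exists [::]; split.
  have [L' [h1 h2]] := IH (fun y' hy' => h y' (or_intror hy')).
  have [ls [hls1 hls2]] := h y (or_introl erefl).
  exists (List.app (List.map (fun s' => wmul s' (wr_Z G y)) ls) L'); split.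
    move=> z /List.in_app_iff [/List.in_map_iff [s' [<- hs']]|hz]; last exact: h1.
    by apply: inGamma_mul; [case: (hls1 _ hs')|apply: inGamma_Z].
  move=> y0 [<-|hy0] sg hsg.
    have [s' [hin [g [hg E]]]] := hls2 sg hsg.
    exists (wmul s' (wr_Z G y)); split.
      by apply: List.in_or_app; left; apply: List.in_map.
    exists g; split; first by case: hg.
    by rewrite E /tau_phi !mulA mulgVK.
  have [z [hz hz']] := h2 y0 hy0 sg hsg.
  by exists z; split => //; apply: List.in_or_app; right.
exists L; split => // x hx.
have [y [hy [n [_ E]]]] := hcov x.2.
set z := wmul (wmul (wr_Z G n) x) (phi (winv (wr_Z G n))).
have hxz : tw phi x z by exists (wr_Z G n); split => //; exact: inGamma_Z.
have hz : inGamma z.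
  apply: inGamma_mul; first by apply: inGamma_mul => //; exact: inGamma_Z.
  by apply: hG; apply: inGamma_inv; exact: inGamma_Z.
have z2 : z.2 = y by rewrite /z /= invZ E.
have [w [hw hzw]] := HL2 y hy (z.1, 0) (inSigma_part hz).
rewrite -z2 -decomp in hzw.
by exists w; split => //; exact (tw_trans hphi hxz hzw).
Qed.

Lemma forward1 : R_Gamma_fin phi -> R_Zk_fin (phibar phi).
Proof.
case=> s [hs1 hs2]; exists (List.map snd s); split => // m _.
have [y [hy [g [hg E]]]] := hs2 (wr_Z G m) (@inGamma_Z G k m).
exists y.2; split; first exact: List.in_map.
exists g.2; split => //.
by rewrite E /= (phi2 hphi) //; apply: inGamma_inv.
Qed.

Lemma forward2 : R_Gamma_fin phi -> R_Zk_fin (phibar phi) ->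
  forall m, R_Sigma_fin (tau_phi phi m).
Proof.
move=> hGa hZ.
have hfix := fix_trivial (phibar_add hphi) hZ.
case: hGa => s [hs1 hs2] m.
have [L [HL1 HL2]] : exists L, (forall sg, List.In sg L -> inSigma sg) /\
    forall y, List.In y s -> (exists sg, inSigma sg /\ tw phi (wmul sg (wr_Z G m)) y) ->
      exists s', List.In s' L /\ tw phi (wmul s' (wr_Z G m)) y.
  elim: s {hs1 hs2} => [|y s IH]; first by exists [::].
  have [L [h1 h2]] := IH.
  destruct (classic (exists sg, inSigma sg /\ tw phi (wmul sg (wr_Z G m)) y))
    as [[sg [hsg hsgy]]|hn].
    exists (sg :: L); split.
      by move=> s' [<-|hs']; [|apply: h1].
    move=> y0 [<-|hy0] hex; first by exists sg; split => //; left.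
    by have [s' [hin hs']] := h2 y0 hy0 hex; exists s'; split => //; right.
  exists L; split => //.
  move=> y0 [<-|hy0] hex; first by case: (hn hex).
  exact: h2 y0 hy0 hex.
exists L; split => // sg hsg.
set x := wmul sg (wr_Z G m).
have hx : inGamma x by apply: inGamma_mul; [case: hsg|apply: inGamma_Z].
have [y [hy hxy]] := hs2 x hx.
have [s' [hin hs'y]] := HL2 y hy (ex_intro _ sg (conj hsg hxy)).
have [g [hg E]] := tw_trans hphi hxy (tw_sym hphi hs'y).
have hg2 : g.2 = 0.
  have := congr1 snd E; rewrite /= (phi2 hphi); last exact: inGamma_inv.
  rewrite (HL1 s' hin).2 hsg.2 => e.
  have : phibar phi (- g.2) = - g.2.
    apply/rowP => i; move/rowP/(_ i): e; rewrite !mxE => e.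
    apply/eqP; rewrite -addr_eq0; apply/eqP; apply: (addIr (m 0 i)).
    rewrite -[X in _ = X]add0r e; ring.
  by move/hfix/eqP; rewrite oppr_eq0 => /eqP.
have hgS : inSigma g by split.
exists s'; split => //; exists g; split => //.
by rewrite -(mulgK s' (wr_Z G m)) E /tau_phi !mulA.
Qed.

End Main.

Theorem mainTheorem2 (G : finZmodType) (k : nat) (hk : (0 < k)%N)
  (phi : Wr G k -> Wr G k) (hphi : is_wr_aut phi) :
  (R_Gamma_fin phi <->
     R_Zk_fin (phibar phi) /\ (forall m : Zk k, R_Sigma_fin (tau_phi phi m)))
  /\
  (forall S : Zk k -> Prop, Zk_reps (phibar phi) S ->
     R_Zk_fin (phibar phi) ->
     (forall m, S m -> R_Sigma_fin (tau_phi phi m)) ->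
     R_Gamma_fin phi).
Proof.
split; first split.
- move=> h; split; first exact: forward1.
  exact: forward2 h (forward1 hphi h).
- case=> [[s [_ hs]] hS].
  apply: (back hphi (s := s)) => [m|y _]; [exact: hs m I|exact: hS].
- move=> S [hS1 [hS2 _]] [s0 [_ hs0]] hSfin.
  have [s [h1 h2]] : exists s, (forall y, List.In y s -> S y) /\
      forall y0, List.In y0 s0 -> exists y, List.In y s /\ twZ phi y0 y.
    elim: s0 {hs0} => [|y0 s0 IH]; first by exists [::].
    have [s [h1 h2]] := IH.
    have [r [hr hyr]] := hS2 y0 I.
    exists (r :: s); split; first by move=> y [<-|hy]; [|apply: h1].
    move=> y1 [<-|hy1]; first by exists r; split => //; left.
    by have [y [hy hy']] := h2 y1 hy1; exists y; split => //; right.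
  apply: (back hphi (s := s)) => [m|y hy]; last exact: hSfin (h1 y hy).
  have [y0 [hy0 h]] := hs0 m I.
  have [y [hy hy']] := h2 y0 hy0.
  by exists y; split => //; apply: twZ_trans hy'.
Qed.
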